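(* Let $\mathbb{F}$ be a field of characteristic zero, let $d\geq 2$ and $t\geq 1$ be integers, and let $\mathfrak{n}_{d,t}$ be the free $t$-step nilpotent Lie algebra over $\mathbb{F}$ on $d$ generators. Let $\mathfrak{t}$ be an ideal of $\mathfrak{n}_{d,t}$ such that $\mathfrak{t}\subseteq \mathfrak{n}_{d,t}^2$ and $\mathfrak{n}_{d,t}^t\not\subseteq \mathfrak{t}$. Define $$\mathrm{Aut}_{\mathfrak{t}}\,\mathfrak{n}_{d,t}=\{\Phi\in\mathrm{Aut}\,\mathfrak{n}_{d,t}:\ \Phi(\mathfrak{t})\subseteq\mathfrak{t}\},\qquad \mathrm{Aut}^\circ_{\mathfrak{t}}\,\mathfrak{n}_{d,t}=\{\Phi\in\mathrm{Aut}\,\mathfrak{n}_{d,t}:\ \mathrm{Im}(\Phi-\mathrm{Id})\subseteq\mathfrak{t}\}.$$ Then $\mathrm{Aut}^\circ_{\mathfrak{t}}\,\mathfrak{n}_{d,t}$ is a normal subgroup of $\mathrm{Aut}_{\mathfrak{t}}\,\mathfrak{n}_{d,t}$, and the automorphism group $\mathrm{Aut}\,\dfrac{\mathfrak{n}_{d,t}}{\mathfrak{t}}$ of the quotient Lie algebra is isomorphic to the quotient group $\dfrac{\mathrm{Aut}_{\mathfrak{t}}\,\mathfrak{n}_{d,t}}{\mathrm{Aut}^\circ_{\mathfrak{t}}\,\mathfrak{n}_{d,t}}$.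
   Context: All vector spaces are finite-dimensional. For a Lie algebra $\mathfrak{n}$, the lower central series is $\mathfrak{n}^1=\mathfrak{n}$, $\mathfrak{n}^{i+1}=[\mathfrak{n},\mathfrak{n}^i]$. The free $t$-step nilpotent Lie algebra on a set $U=\{x_1,\dots,x_d\}$ is $\mathfrak{n}_{d,t}=\mathfrak{FL}(U)/\mathfrak{FL}(U)^{t+1}$, where $\mathfrak{FL}(U)$ is the free Lie algebra over $\mathbb{F}$ generated by $U$. $\mathrm{Aut}\,\mathfrak{n}$ denotes the group of Lie algebra automorphisms of $\mathfrak{n}$. *)

(* Defs.v *)
From HB Require Import structures.
From mathcomp Require Import all_boot all_order all_algebra.

Set Implicit Arguments.
Unset Strict Implicit.
Unset Printing Implicit Defensive.

Import GRing.Theory.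
Local Open Scope ring_scope.

Definition is_lie (F : fieldType) (V : vectType F) (br : V -> V -> V) : Prop :=
  [/\ (forall (a : F) (u v w : V), br (a *: u + v) w = a *: br u w + br v w),
      (forall (a : F) (u v w : V), br w (a *: u + v) = a *: br w u + br w v),
      (forall u : V, br u u = 0) &
      (forall u v w : V, br u (br v w) + br v (br w u) + br w (br u v) = 0)].

(* [U, W] = span of all brackets [u, w], u in U, w in W (by bilinearity it is
   the span of the brackets of basis vectors). *)
Definition bracket_space (F : fieldType) (V : vectType F) (br : V -> V -> V)
    (U W : {vspace V}) : {vspace V} :=
  (<< [seq br u w | u <- vbasis U, w <- vbasis W] >>)%VS.

Fixpoint lcs_from (F : fieldType) (V : vectType F) (br : V -> V -> V) (k : nat)
    : {vspace V} :=
  if k is k'.+1 then bracket_space br fullv (lcs_from br k') else fullv.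

(* paper's indexing: lcs br 1 = n^1 = n, lcs br (i+1) = [n, n^i] *)
Definition lcs (F : fieldType) (V : vectType F) (br : V -> V -> V) (i : nat)
    : {vspace V} := lcs_from br i.-1.

Definition nilpotent_step (F : fieldType) (V : vectType F) (br : V -> V -> V)
    (t : nat) : Prop := lcs br t.+1 = 0%VS.

Definition lie_hom (F : fieldType) (V W : vectType F) (brV : V -> V -> V)
    (brW : W -> W -> W) (f : 'Hom(V, W)) : Prop :=
  forall u v : V, f (brV u v) = brW (f u) (f v).

Definition lie_aut (F : fieldType) (V : vectType F) (br : V -> V -> V)
    (f : 'End(V)) : Prop :=
  [/\ lie_hom br br f, lker f = 0%VS & limg f = fullv].

Definition lie_ideal (F : fieldType) (V : vectType F) (br : V -> V -> V)
    (I : {vspace V}) : Prop :=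
  forall u v : V, v \in I -> br u v \in I.

Definition is_free_nilpotent (F : fieldType) (d t : nat) (V : vectType F)
    (br : V -> V -> V) (x : 'I_d -> V) : Prop :=
  [/\ is_lie br, nilpotent_step br t &
      forall (W : vectType F) (brW : W -> W -> W),
        is_lie brW -> nilpotent_step brW t ->
        forall y : 'I_d -> W,
          exists! f : 'Hom(V, W), lie_hom br brW f /\ forall i, f (x i) = y i].
Arguments is_free_nilpotent {F} d t {V} br x.

Definition is_lie_quotient (F : fieldType) (V Q : vectType F)
    (br : V -> V -> V) (I : {vspace V}) (brQ : Q -> Q -> Q) (pi : 'Hom(V, Q))
    : Prop :=
  [/\ is_lie brQ, lie_hom br brQ pi, limg pi = fullv & lker pi = I].

(* Group-theoretic notions for groups of endomorphisms under composition;
   the group inverse of a bijective endomorphism f is (f^-1)%VF. *)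
Definition End_subgroup (F : fieldType) (V : vectType F)
    (G H : 'End(V) -> Prop) : Prop :=
  [/\ (forall f, H f -> G f), H \1%VF,
      (forall f g, H f -> H g -> H (f \o g)%VF) &
      (forall f, H f -> H (f^-1)%VF)].

Definition End_normal_subgroup (F : fieldType) (V : vectType F)
    (G N : 'End(V) -> Prop) : Prop :=
  End_subgroup G N /\
  forall g n, G g -> N n -> N (g \o n \o g^-1)%VF.

(* psi induces a group isomorphism from the quotient group G / N onto H:
   psi is multiplicative on G, psi f = psi g iff f N = g N (i.e. f^-1 g in N),
   psi maps G into H and onto H. *)
Definition quotient_group_iso (F : fieldType) (V W : vectType F)
    (G N : 'End(V) -> Prop) (H : 'End(W) -> Prop)
    (psi : 'End(V) -> 'End(W)) : Prop :=
  [/\ (forall f, G f -> H (psi f)),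
      (forall f g, G f -> G g -> psi (f \o g)%VF = (psi f \o psi g)%VF),
      (forall f g, G f -> G g -> (psi f = psi g <-> N (f^-1 \o g)%VF)) &
      (forall h, H h -> exists2 f, G f & psi f = h)].

Definition Aut_stab (F : fieldType) (V : vectType F) (br : V -> V -> V)
    (T : {vspace V}) (f : 'End(V)) : Prop :=
  lie_aut br f /\ (f @: T <= T)%VS.

Definition Aut_triv (F : fieldType) (V : vectType F) (br : V -> V -> V)
    (T : {vspace V}) (f : 'End(V)) : Prop :=
  lie_aut br f /\ (limg (f - \1%VF) <= T)%VS.

(* Main.v *)
Require Import Defs.
From HB Require Import structures.
From mathcomp Require Import all_boot all_order all_algebra.

Set Implicit Arguments.
Unset Strict Implicit.
Unset Printing Implicit Defensive.

Import GRing.Theory.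
Local Open Scope ring_scope.

Section Lie.
Variables (F : fieldType) (V : vectType F) (br : V -> V -> V).
Hypothesis Hl : is_lie br.

Lemma br0l w : br 0 w = 0.
Proof.
case: Hl => H1 _ _ _; have := H1 1 0 0 w; rewrite scaler0 addr0 scale1r.
by move/(congr1 (fun z => z - br 0 w)); rewrite subrr addrK.
Qed.
Lemma br0r w : br w 0 = 0.
Proof.
case: Hl => _ H1 _ _; have := H1 1 0 0 w; rewrite scaler0 addr0 scale1r.
by move/(congr1 (fun z => z - br w 0)); rewrite subrr addrK.
Qed.
Lemma brDl u v w : br (u + v) w = br u w + br v w.
Proof. by case: Hl => H1 _ _ _; have := H1 1 u v w; rewrite !scale1r. Qed.
Lemma brDr u v w : br w (u + v) = br w u + br w v.
Proof. by case: Hl => _ H1 _ _; have := H1 1 u v w; rewrite !scale1r. Qed.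
Lemma brZl a u w : br (a *: u) w = a *: br u w.
Proof. by case: Hl => H1 _ _ _; have := H1 a u 0 w; rewrite !addr0 br0l addr0. Qed.
Lemma brZr a u w : br w (a *: u) = a *: br w u.
Proof. by case: Hl => _ H1 _ _; have := H1 a u 0 w; rewrite !addr0 br0r addr0. Qed.
Lemma brA u v : br u v = - br v u.
Proof.
case: Hl => _ _ H3 _; have := H3 (u + v).
by rewrite brDl !brDr !H3 add0r addr0 => /eqP; rewrite addr_eq0 => /eqP.
Qed.
Lemma br_suml n (G : 'I_n -> V) w :
  br (\sum_(i < n) G i) w = \sum_(i < n) br (G i) w.
Proof. exact: (big_morph (fun u => br u w) (fun u v => brDl u v w) (br0l w)). Qed.
Lemma br_sumr n (G : 'I_n -> V) w :
  br w (\sum_(i < n) G i) = \sum_(i < n) br w (G i).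
Proof. exact: (big_morph (fun u => br w u) (fun u v => brDr u v w) (br0r w)). Qed.

Lemma mem_bracket (U W : {vspace V}) u w :
  u \in U -> w \in W -> br u w \in bracket_space br U W.
Proof.
move=> uU wW; rewrite (coord_vbasis uU) (coord_vbasis wW) br_suml.
apply: memv_suml => i _; rewrite brZl br_sumr; apply: memvZ.
apply: memv_suml => j _; rewrite brZr; apply: memvZ; apply: memv_span.
by apply: allpairs_f; apply: mem_nth; rewrite size_tuple.
Qed.

Lemma span_left (X : seq V) (S : {vspace V}) c :
  (forall g, g \in X -> br g c \in S) -> forall v, v \in <<X>>%VS -> br v c \in S.
Proof.
move=> H v vX; rewrite (coord_span (X := in_tuple X) vX) br_suml.
apply: memv_suml => i _; rewrite brZl; apply: memvZ; apply: H.
by apply: mem_nth; exact: ltn_ord.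
Qed.

Notation L k := (lcs_from br k).

Lemma lcs_br k u w : w \in L k -> br u w \in L k.+1.
Proof. by move=> wk; apply: mem_bracket => //; apply: memvf. Qed.
Lemma lcs_brl k u w : u \in L k -> br u w \in L k.+1.
Proof. by move=> uk; rewrite brA memvN; apply: lcs_br. Qed.

Lemma lcs1_br k v c : v \in L 1 -> c \in L k -> br v c \in L k.+2.
Proof.
move=> v1 ck; apply: (span_left _ v1) => _ /allpairsP [[a b] [_ _ ->]] /=.
case: Hl => _ _ _ H4; have J := H4 c a b.
rewrite (brA (br a b) c); move/eqP: J; rewrite -addrA addr_eq0 => /eqP ->.
rewrite opprK; apply: memvD; first by apply: (@lcs_br k.+1); apply: lcs_br.
by apply: (@lcs_br k.+1); apply: lcs_brl.
Qed.

End Lie.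

Lemma bracket_sub (F : fieldType) (V : vectType F) (br : V -> V -> V)
  (U W S : {vspace V}) :
  (forall u w, u \in U -> w \in W -> br u w \in S) ->
  (bracket_space br U W <= S)%VS.
Proof.
move=> H; apply/span_subvP => z /allpairsP [[u w] [/= uU wW ->]].
by apply: H; apply: vbasis_mem.
Qed.
Lemma nil_inj (F : fieldType) (V : vectType F) (br : V -> V -> V) t0 (e : 'End(V)) :
  is_lie br -> lie_hom br br e -> lcs_from br t0 = 0%VS ->
  (forall v, e v - v \in lcs_from br 1) -> injective e.
Proof.
move=> Hl He Ht H1.
have D k : forall v, v \in lcs_from br k -> e v - v \in lcs_from br k.+1.
  elim: k => [|k IH] v vk; first exact: H1.
  have sub : (lcs_from br k.+1 <= (e - \1)%VF @^-1: lcs_from br k.+2)%VS.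
    apply: bracket_sub => u w _ wk.
    rewrite -memv_preim add_lfunE opp_lfunE id_lfunE He.
    have key : forall du dw, du \in lcs_from br 1 -> dw \in lcs_from br k.+1 ->
        br (du + u) (dw + w) - br u w \in lcs_from br k.+2.
      move=> du dw du1 dwk.
      rewrite (brDl Hl) !(brDr Hl) addrA addrK.
      apply: memvD; first apply: memvD.
      - exact: (@lcs_br _ _ _ Hl k.+1).
      - exact: (lcs1_br Hl).
      - exact: (@lcs_br _ _ _ Hl k.+1).
    by have := key _ _ (H1 u) (IH w wk); rewrite !subrK.
  by move/subvP: sub => /(_ v vk); rewrite -memv_preim add_lfunE opp_lfunE id_lfunE.
have Z v : e v = 0 -> v = 0.
  move=> ev0; have : forall k, v \in lcs_from br k.
    elim=> [|k IH]; first exact: memvf.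
    by have := D k v IH; rewrite ev0 sub0r memvN.
  by move/(_ t0); rewrite Ht memv0 => /eqP.
move=> u v euv; apply/eqP; rewrite -subr_eq0; apply/eqP; apply: Z.
by rewrite linearB /= euv subrr.
Qed.

Lemma lcs_img (F : fieldType) (V Q : vectType F) (br : V -> V -> V)
  (brQ : Q -> Q -> Q) (pi : 'Hom(V, Q)) k :
  is_lie br -> lie_hom br brQ pi -> limg pi = fullv ->
  (lcs_from brQ k <= pi @: lcs_from br k)%VS.
Proof.
move=> Hl Hh Hi; elim: k => [|k IH] /=; first by rewrite Hi subvv.
apply: bracket_sub => u w _ /(subvP IH)/memv_imgP [w' w'k ->].
have : u \in limg pi by rewrite Hi memvf.
case/memv_imgP => u' _ ->; rewrite -Hh; apply: memv_img.
exact: (mem_bracket Hl (memvf u') w'k).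
Qed.

Section Aut.
Variables (F : fieldType) (V : vectType F) (br : V -> V -> V).

Lemma aut_inj f : lie_aut br f -> injective f.
Proof. by case=> _ /eqP k _; apply/lker0P. Qed.
Lemma autK f : lie_aut br f -> cancel f f^-1%VF.
Proof. by case=> _ /eqP k _; apply: lker0_lfunK. Qed.
Lemma autVK f : lie_aut br f -> cancel f^-1%VF f.
Proof. by case=> _ /eqP k _; apply: lker0_lfunVK. Qed.
Lemma aut_of_inj f : lie_hom br br f -> injective f -> lie_aut br f.
Proof.
move=> Hh Hi; have k : lker f == 0%VS by apply/lker0P.
by split => //; [apply/eqP | apply: lker0_limgf].
Qed.
Lemma aut_id : lie_aut br \1%VF.
Proof.
apply: aut_of_inj; first by move=> u v; rewrite !id_lfunE.
by move=> u v; rewrite !id_lfunE.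
Qed.
Lemma aut_comp f g : lie_aut br f -> lie_aut br g -> lie_aut br (f \o g)%VF.
Proof.
move=> Hf Hg; apply: aut_of_inj.
  by case: Hf => Hf _ _; case: Hg => Hg _ _ u v; rewrite !comp_lfunE Hg Hf.
by move=> u v; rewrite !comp_lfunE => /(aut_inj Hf) /(aut_inj Hg).
Qed.
Lemma aut_inv f : lie_aut br f -> lie_aut br f^-1%VF.
Proof.
move=> Hf; apply: aut_of_inj; last exact: can_inj (autVK Hf).
move=> u v; apply: (aut_inj Hf); case: (Hf) => Hh _ _.
by rewrite Hh !(autVK Hf).
Qed.

Lemma img_subI (f : 'End(V)) (T : {vspace V}) :
  (f @: T <= T)%VS -> forall v, v \in T -> f v \in T.
Proof. by move/subvP => H v vT; apply: H; apply: memv_img. Qed.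
Lemma img_subP (f : 'End(V)) (T : {vspace V}) :
  (forall v, v \in T -> f v \in T) -> (f @: T <= T)%VS.
Proof. by move=> H; apply/subvP => _ /memv_imgP [v vT ->]; apply: H. Qed.

Lemma stab_inv f (T : {vspace V}) : lie_aut br f -> (f @: T <= T)%VS ->
  forall w, f w \in T -> w \in T.
Proof.
move=> Hf Hs w; have E : (f @: T)%VS = T.
  apply/eqP; rewrite eqEdim Hs /= limg_dim_eq //.
  by case: Hf => _ -> _; rewrite capv0.
rewrite -{1}E => /memv_imgP [u uT /(aut_inj Hf) ->] //.
Qed.

Lemma triv_I (f : 'End(V)) (T : {vspace V}) :
  (limg (f - \1%VF) <= T)%VS -> forall v, f v - v \in T.
Proof.
move/subvP => H v; have := H _ (memv_img (f - \1%VF) (memvf v)).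
by rewrite add_lfunE opp_lfunE id_lfunE.
Qed.
Lemma triv_P (f : 'End(V)) (T : {vspace V}) :
  (forall v, f v - v \in T) -> (limg (f - \1%VF) <= T)%VS.
Proof.
move=> H; apply/subvP => _ /memv_imgP [v _ ->].
by rewrite add_lfunE opp_lfunE id_lfunE.
Qed.
End Aut.

Theorem theorem2 (F : fieldType) (d t : nat) (V : vectType F)
    (br : V -> V -> V) (x : 'I_d -> V) (T : {vspace V})
    (Q : vectType F) (brQ : Q -> Q -> Q) (pi : 'Hom(V, Q)) :
  [pchar F] =i pred0 ->
  (2 <= d)%N -> (1 <= t)%N ->
  is_free_nilpotent d t br x ->
  lie_ideal br T ->
  (T <= lcs br 2)%VS ->
  ~~ (lcs br t <= T)%VS ->
  is_lie_quotient br T brQ pi ->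
  [/\ End_subgroup (lie_aut br) (Aut_stab br T),
      End_normal_subgroup (Aut_stab br T) (Aut_triv br T) &
      exists psi : 'End(V) -> 'End(Q),
        quotient_group_iso (Aut_stab br T) (Aut_triv br T) (lie_aut brQ) psi].
Proof.
move=> _ _ _ Hfree _ HT2 _ [HlQ Hpih Hpii Hpik].
have [Hl Hn Hu] := Hfree.
have SG : End_subgroup (lie_aut br) (Aut_stab br T).
  split.
  - by move=> f [].
  - by split; [exact: aut_id | rewrite lim1g].
  - move=> f g [Hf Sf] [Hg Sg]; split; first exact: aut_comp.
    by rewrite limg_comp; apply: subv_trans Sf; apply: limgS.
  - move=> f [Hf Sf]; split; first exact: aut_inv.
    apply: img_subP => v vT; apply: (stab_inv Hf Sf).
    by rewrite (autVK Hf).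
have [_ _ _ SGinv] := SG.
split => //.
  split.
    split.
    - move=> f [Hf Tf]; split => //; apply: img_subP => v vT.
      by rewrite -(subrK v (f v)); apply: memvD => //; apply: triv_I.
    - split; first exact: aut_id.
      by apply: triv_P => v; rewrite id_lfunE subrr mem0v.
    - move=> f g [Hf Tf] [Hg Tg]; split; first exact: aut_comp.
      apply: triv_P => v; rewrite comp_lfunE -(subrK (g v) (f (g v))) -addrA.
      by apply: memvD; apply: triv_I.
    - move=> f [Hf Tf]; split; first exact: aut_inv.
      apply: triv_P => v; rewrite -opprB -{1}[v](autVK Hf) memvN.
      exact: triv_I.
  move=> g n [Hg Sg] [Hn' Tn]; split.
    by apply: aut_comp; [apply: aut_comp | apply: aut_inv].
  apply: triv_P => v; rewrite !comp_lfunE -{2}[v](autVK Hg) -linearB /=.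
  by apply: (img_subI Sg); apply: triv_I.
have piS : forall q, pi (pi^-1%VF q) = q.
  by move=> q; rewrite limg_lfunVK // Hpii memvf.
have piE : forall q, exists u, q = pi u.
  by move=> q; exists (pi^-1%VF q); rewrite piS.
have kerT : forall v, (v \in T) = (pi v == 0).
  by move=> v; rewrite -Hpik memv_ker.
pose psi := fun f : 'End(V) => (pi \o f \o pi^-1)%VF.
have Hpsi : forall f, (f @: T <= T)%VS -> forall w, psi f (pi w) = pi (f w).
  move=> f Sf w; rewrite /psi !comp_lfunE; apply/eqP; rewrite -subr_eq0.
  rewrite -!linearB /= -kerT; apply: (img_subI Sf).
  by rewrite kerT linearB /= piS subrr.
exists psi; split.
- move=> f [Hf Sf]; apply: aut_of_inj.
    move=> a b; have [u ->] := piE a; have [v ->] := piE b.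
    rewrite -Hpih !Hpsi //; case: Hf => Hh _ _; by rewrite Hh Hpih.
  move=> a b; have [u ->] := piE a; have [v ->] := piE b.
  rewrite !Hpsi // => /eqP; rewrite -subr_eq0 -!linearB /= -kerT => H.
  have := stab_inv Hf Sf H; rewrite kerT linearB /= subr_eq0 => /eqP //.
- move=> f g [Hf Sf] [Hg Sg]; apply/lfunP => q; have [u ->] := piE q.
  have Sfg : ((f \o g) @: T <= T)%VS by rewrite limg_comp; apply: subv_trans Sf; apply: limgS.
  by rewrite comp_lfunE !Hpsi // comp_lfunE.
- move=> f g [Hf Sf] [Hg Sg]; split.
    move=> E; split; first by apply: aut_comp => //; apply: aut_inv.
    apply: triv_P => v; rewrite comp_lfunE.
    have : pi (f v) = pi (g v) by rewrite -!Hpsi // E.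
    move/eqP; rewrite eq_sym -subr_eq0 -linearB /= -kerT => H.
    have := img_subI (proj2 (SGinv f (conj Hf Sf))) H.
    by rewrite linearB /= (autK Hf).
  case=> _ Tr; apply/lfunP => q; have [u ->] := piE q; rewrite !Hpsi //.
  have := img_subI Sf (triv_I Tr u); rewrite linearB /= comp_lfunE (autVK Hf).
  by rewrite kerT linearB /= subr_eq0 eq_sym => /eqP.
- move=> h Hh.
  have HnQ : nilpotent_step brQ t.
    apply/eqP; rewrite -subv0; apply: subv_trans (lcs_img t Hl Hpih Hpii) _.
    by have := Hn; rewrite /nilpotent_step /lcs /= => ->; rewrite limg0.
  have lift : forall k : 'End(Q), lie_hom brQ brQ k ->
      exists f : 'End(V), lie_hom br br f /\ forall v, pi (f v) = k (pi v).
    move=> k Hk.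
    have [f [[fh fx] _]] := Hu V br Hl Hn (fun i => pi^-1%VF (k (pi (x i)))).
    exists f; split => //.
    have [g [_ gU]] := Hu Q brQ HlQ HnQ (fun i => k (pi (x i))).
    have e1 : g = (pi \o f)%VF.
      apply: gU; split; last by move=> i; rewrite comp_lfunE fx piS.
      by move=> u v; rewrite !comp_lfunE fh Hpih.
    have e2 : g = (k \o pi)%VF.
      apply: gU; split; last by move=> i; rewrite comp_lfunE.
      by move=> u v; rewrite !comp_lfunE Hpih Hk.
    move=> v; have := congr1 (fun m : 'Hom(V, Q) => m v) (etrans (esym e1) e2).
    by rewrite !comp_lfunE.
  have [f [fh fE]] := lift h (let: And3 a _ _ := Hh in a).
  have Hhi := aut_inv Hh.
  have [g [gh gE]] := lift _ (let: And3 a _ _ := Hhi in a).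
  have einj : injective (g \o f)%VF.
    apply: (nil_inj (t0 := t) Hl).
    - by move=> u v; rewrite !comp_lfunE fh gh.
    - exact: Hn.
    move=> v; apply: (subvP HT2); rewrite kerT linearB /= comp_lfunE gE fE.
    by rewrite (autK Hh) subrr.
  have Hf : lie_aut br f.
    by apply: aut_of_inj => // u v fuv; apply: einj; rewrite !comp_lfunE fuv.
  have Sf : (f @: T <= T)%VS.
    by apply: img_subP => v; rewrite !kerT fE => /eqP ->; rewrite linear0.
  exists f; first by split.
  by apply/lfunP => q; rewrite /psi !comp_lfunE fE piS.
Qed.
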